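(* Let $a_1,\dots,a_n\in\mathbb{F}$ and $r_1,\dots,r_n\in\mathbb{Z}_+$ be such that $\Omega=\{(x-a_1)^{r_1},\dots,(x-a_n)^{r_n}\}$ has size $n$ and is P-independent. Then there exist $\beta_{i,j}\in\mathbb{F}^*$, for $j=1,\dots,r_i$ and $i=1,\dots,n$, such that for all such $i,j$, setting $\Omega_{i,j}=\{(x-a_1)^{r_1},\dots,(x-a_{i-1})^{r_{i-1}},(x-a_i)^j\}$, $$F_{\Omega_{i,j}}=(x-a_i^{\beta_{i,j}})\cdots(x-a_i^{\beta_{i,1}})(x-a_{i-1}^{\beta_{i-1,r_{i-1}}})\cdots(x-a_{i-1}^{\beta_{i-1,1}})\cdots(x-a_1^{\beta_{1,r_1}})\cdots(x-a_1^{\beta_{1,1}}).$$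
   Context: Let $\mathbb{F}$ be a division ring, $\sigma$ a ring endomorphism of $\mathbb{F}$ and $\delta$ a $\sigma$-derivation; $\mathbb{F}[x;\sigma,\delta]$ is the skew polynomial ring with $xa=\sigma(a)x+\delta(a)$. For $a\in\mathbb{F}$, $\beta\in\mathbb{F}^*$, the $(\sigma,\delta)$-conjugate is $a^\beta=\sigma(\beta)a\beta^{-1}+\delta(\beta)\beta^{-1}$. For a set $\Omega$ of skew polynomials, $I(\Omega)$ is the left ideal of skew polynomials right-divisible by every element of $\Omega$ and $F_\Omega$ its monic generator of minimal degree (or $0$). $\Omega$ is P-independent if it is finite, $I(\Omega)\ne\{0\}$ and $\deg F_\Omega=\sum_{P\in\Omega}\deg P$. *)

(* Defs.v *)
(* Skew polynomials F[x; sigma, delta] over a division ring F,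
   represented by their (left) coefficient sequences, stored in {poly F}
   (only the additive structure / coefficients of {poly F} are used; the
   multiplication is the skew one, [skmul], defined below). *)
From HB Require Import structures.
From mathcomp Require Import all_boot all_order all_algebra.
From Stdlib Require Import ClassicalEpsilon.
Set Implicit Arguments. Unset Strict Implicit. Unset Printing Implicit Defensive.
Import Order.TTheory GRing.Theory.
Local Open Scope ring_scope.

Section Skew.
Variable F : unitRingType.
Variable sigma : F -> F.
Variable delta : F -> F.

(* left multiplication by x:  x * (sum p_i x^i) = sum (sigma p_i x^(i+1) + delta p_i x^i) *)
Definition skmulX (p : {poly F}) : {poly F} :=
  \poly_(i < (size p).+1)
     ((if i is k.+1 then sigma p`_k else 0) + delta p`_i).

(* skew product: (sum p_i x^i) * q = sum p_i (x^i q); p_i *: _ scales coefficients on the left *)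
Definition skmul (p q : {poly F}) : {poly F} :=
  \sum_(i < size p) p`_i *: iter i skmulX q.

Definition skpow (p : {poly F}) (r : nat) : {poly F} := iter r (skmul p) 1.

Definition rdivides (q p : {poly F}) : Prop := exists s : {poly F}, p = skmul s q.

Definition Iset (Om : seq {poly F}) (p : {poly F}) : Prop :=
  forall q, q \in Om -> rdivides q p.

Definition is_Fgen (Om : seq {poly F}) (G : {poly F}) : Prop :=
  (Iset Om G /\ G \is monic /\
     forall p, Iset Om p -> p != 0 -> (size G <= size p)%N)
  \/ (G = 0 /\ forall p, Iset Om p -> p = 0).

Definition F_Omega (Om : seq {poly F}) : {poly F} :=
  epsilon (inhabits 0) (is_Fgen Om).

Definition skdeg (p : {poly F}) : nat := (size p).-1.

Definition P_independent (Om : seq {poly F}) : Prop :=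
  uniq Om /\ (exists p, Iset Om p /\ p != 0) /\
  skdeg (F_Omega Om) = (\sum_(q <- Om) skdeg q)%N.

Definition conj (a beta : F) : F :=
  sigma beta * a * beta^-1 + delta beta * beta^-1.

Definition xsub (a : F) : {poly F} := 'X - a%:P.

(* product of the list from right to left: [f1; f2; ...; fm] |-> fm * ... * f2 * f1 *)
Definition skprod_rev (fs : seq {poly F}) : {poly F} :=
  foldl (fun acc f => skmul f acc) 1 fs.

End Skew.

(* Main.v *)
Require Import Defs.
From HB Require Import structures.
From mathcomp Require Import all_boot all_order all_algebra zify.
From Stdlib Require Import ClassicalEpsilon Classical.
Import GRing.Theory.

Lemma count_lemma (n : nat) (r : nat -> nat) (E : nat -> nat -> nat) (Z S : nat -> nat) :
  (forall i, S i.+1 = S i + r i) ->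
  (forall i, i < n -> E i 0 = Z i) ->
  (forall i, i < n -> E i (r i) = Z i.+1) ->
  Z 0 = 1 -> S 0 = 0 -> Z n = S n + 1 ->
  (forall i j, i < n -> j < r i -> E i j.+1 <= E i j + 1) ->
  forall i j, i < n -> j <= r i -> E i j = S i + j + 1.
Proof.
move=> hS h0 hr hZ0 hS0 hZn hstep.
have ha : forall i j, i < n -> j <= r i -> E i j <= Z i + j.
  move=> i j hi; elim: j => [|j IH] hj; first by rewrite h0 // addn0.
  have := hstep i j hi hj; have := IH (ltnW hj); lia.
have hb : forall i, i <= n -> Z i <= S i + 1.
  elim => [|i IH] hi; first by rewrite hZ0 hS0.
  rewrite -hr // hS; have := ha i (r i) hi (leqnn _); have := IH (ltnW hi); lia.
have hc : forall i j, i < n -> j <= r i -> Z i.+1 + j <= E i j + r i.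
  move=> i j hi hj; move: {2}(r i - j) (erefl (r i - j)) => m.
  elim: m j hj => [|m IH] j hj hm.
    have -> : j = r i by lia.
    by rewrite hr.
  have hj' : j < r i by lia.
  have := IH j.+1 hj' ltac:(lia); have := hstep i j hi hj'; lia.
have hd : forall i k, i + k <= n -> Z (i + k) + S i <= Z i + S (i + k).
  move=> i; elim => [|k IH] hk; first by rewrite addn0.
  rewrite addnS -hr; last by lia.
  rewrite hS; have := ha (i + k) (r (i + k)) ltac:(lia) (leqnn _); have := IH ltac:(lia); lia.
move=> i j hi hj.
have := hd i.+1 (n - i.+1) ltac:(lia); rewrite subnKC // hZn => h1.
have := hc i j hi hj; have := ha i j hi hj; have := hb i (ltnW hi); have := hS i; lia.
Qed.

Local Open Scope ring_scope.

Section S.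
Variable F : unitRingType.
Hypothesis Fdiv : forall c : F, c != 0 -> c \is a GRing.unit.
Variable sigma : {rmorphism F -> F}.
Variable delta : F -> F.
Hypothesis delta_add : forall b c : F, delta (b + c) = delta b + delta c.
Hypothesis delta_mul : forall b c : F, delta (b * c) = sigma b * delta c + delta b * c.

Local Notation X := (skmulX sigma delta).
Local Notation M := (skmul sigma delta).

Lemma delta0 : delta 0 = 0.
Proof. have h := delta_add 0 0; rewrite addr0 in h.
by apply: (addIr (delta 0)); rewrite add0r -h. Qed.

Lemma delta1 : delta 1 = 0.
Proof. have h := delta_mul 1 1; rewrite !mulr1 rmorph1 mul1r in h.
by apply: (addIr (delta 1)); rewrite add0r -h. Qed.

Lemma deltaN b : delta (- b) = - delta b.
Proof. apply: (addrI (delta b)); by rewrite -delta_add !subrr delta0. Qed.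

Lemma coef_X (p : {poly F}) k : (X p)`_k = (if k is k'.+1 then sigma p`_k' else 0) + delta p`_k.
Proof.
rewrite /skmulX coef_poly; case: ltnP => // Hk.
rewrite nth_default; last by apply: leq_trans Hk.
case: k Hk => [|k] Hk; first by rewrite delta0 addr0.
by rewrite nth_default // rmorph0 delta0 addr0.
Qed.

Lemma X_add (p q : {poly F}) : X (p + q) = X p + X q.
Proof.
apply/polyP => k; rewrite coefD !coef_X !coefD delta_add.
case: k => [|k]; first by rewrite !add0r.
rewrite coefD rmorphD; by rewrite addrACA.
Qed.

Lemma X0 : X (0 : {poly F}) = 0.
Proof. apply/polyP => k; rewrite coef_X !coef0 delta0 addr0; case: k => [|k] //. by rewrite coef0 rmorph0. Qed.

Lemma X_opp (p : {poly F}) : X (- p) = - X p.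
Proof. apply: (addrI (X p)); by rewrite -X_add !subrr X0. Qed.

Lemma X_scale c (p : {poly F}) : X (c *: p) = sigma c *: X p + delta c *: p.
Proof.
apply/polyP => k; rewrite coefD !coefZ !coef_X !coefZ delta_mul mulrDr addrA.
case: k => [|k]; rewrite ?mulr0 ?add0r //. by rewrite coefZ rmorphM.
Qed.

Lemma X_sum (I : Type) (s : seq I) (P : pred I) (f : I -> {poly F}) :
  X (\sum_(i <- s | P i) f i) = \sum_(i <- s | P i) X (f i).
Proof. by apply: (big_morph X X_add X0). Qed.

Lemma iterX_add k (p q : {poly F}) : iter k X (p + q) = iter k X p + iter k X q.
Proof. by elim: k => //= k ->; rewrite X_add. Qed.

Lemma iterX0 k : iter k X (0 : {poly F}) = 0.
Proof. by elim: k => //= k ->; rewrite X0. Qed.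

Lemma skmulE N (p q : {poly F}) : (size p <= N)%N ->
  M p q = \sum_(i < N) p`_i *: iter i X q.
Proof.
move=> hN; rewrite /skmul (big_ord_widen N (fun i => p`_i *: iter i X q)) //.
rewrite big_mkcond; apply: eq_bigr => i _; case: ltnP => // h.
by rewrite nth_default // scale0r.
Qed.

Lemma M_addl (p p' q : {poly F}) : M (p + p') q = M p q + M p' q.
Proof.
rewrite (@skmulE (maxn (size p) (size p')) (p + p')); last first.
  by apply: leq_trans (size_polyD _ _) _.
rewrite (@skmulE (maxn (size p) (size p')) p) ?leq_maxl //.
rewrite (@skmulE (maxn (size p) (size p')) p') ?leq_maxr //.
by rewrite -big_split; apply: eq_bigr => i _; rewrite coefD scalerDl.
Qed.

Lemma M_scalel c (p q : {poly F}) : M (c *: p) q = c *: M p q.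
Proof.
rewrite (@skmulE (size p) (c *: p)) ?size_scale_leq // /skmul scaler_sumr.
by apply: eq_bigr => i _; rewrite coefZ scalerA.
Qed.

Lemma M0l (q : {poly F}) : M 0 q = 0.
Proof. by rewrite /skmul size_poly0 big_ord0. Qed.

Lemma M_oppl (p q : {poly F}) : M (- p) q = - M p q.
Proof. by rewrite -scaleN1r M_scalel scaleN1r. Qed.

Lemma M_subl (p p' q : {poly F}) : M (p - p') q = M p q - M p' q.
Proof. by rewrite M_addl M_oppl. Qed.

Lemma M_suml (I : Type) (s : seq I) (P : pred I) (f : I -> {poly F}) q :
  M (\sum_(i <- s | P i) f i) q = \sum_(i <- s | P i) M (f i) q.
Proof. by apply: (big_morph (fun p => M p q) (fun p p' => M_addl p p' q) (M0l q)). Qed.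

Lemma M_addr (p q q' : {poly F}) : M p (q + q') = M p q + M p q'.
Proof.
by rewrite /skmul -big_split; apply: eq_bigr => i _; rewrite iterX_add scalerDr.
Qed.

Lemma M0r (p : {poly F}) : M p 0 = 0.
Proof. by rewrite /skmul big1 // => i _; rewrite iterX0 scaler0. Qed.

Lemma M_oppr (p q : {poly F}) : M p (- q) = - M p q.
Proof. apply: (addrI (M p q)); by rewrite -M_addr !subrr M0r. Qed.

Lemma M_C c (q : {poly F}) : M c%:P q = c *: q.
Proof.
rewrite (@skmulE 1) ?size_polyC ?leq_b1 // big_ord1 /=.
by rewrite coefC.
Qed.

Lemma M_Xn k (q : {poly F}) : M 'X^k q = iter k X q.
Proof.
rewrite (@skmulE k.+1) ?size_polyXn // big_ord_recr /= coefXn eqxx scale1r.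
by rewrite big1 ?add0r // => i _; rewrite coefXn (ltn_eqF (ltn_ord i)) scale0r.
Qed.

Lemma M_X (q : {poly F}) : M 'X q = X q.
Proof. by rewrite -(expr1 'X) M_Xn. Qed.

Lemma X_Xn k : X ('X^k : {poly F}) = 'X^(k.+1).
Proof.
apply/polyP => m; rewrite coef_X !coefXn.
have -> : delta (m == k)%:R = 0 by case: (m == k); rewrite ?delta1 ?delta0.
rewrite addr0; case: m => [|m] /=; first by [].
by rewrite coefXn rmorph_nat eqSS.
Qed.

Lemma M1r (p : {poly F}) : M p 1 = p.
Proof.
have h i : iter i X 1 = 'X^i.
  by elim: i => [|i IH] //=; rewrite IH X_Xn.
rewrite /skmul; under eq_bigr => i _ do rewrite h.
by rewrite -poly_def coefK.
Qed.

Lemma M_Xl (v u : {poly F}) : M (X v) u = X (M v u).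
Proof.
set m := size v.
rewrite (@skmulE m.+1 (X v)); last by rewrite /skmulX size_poly.
rewrite (@skmulE m.+1 v) // X_sum.
under eq_bigr => i _ do rewrite coef_X scalerDl.
rewrite big_split /=.
under [in RHS]eq_bigr => i _ do rewrite X_scale.
rewrite big_split /=; congr (_ + _).
rewrite big_ord_recl /= scale0r add0r big_ord_recr /= nth_default // rmorph0 scale0r addr0.
by apply: eq_bigr => i _.
Qed.

Lemma M_iterXl k (v u : {poly F}) : M (iter k X v) u = iter k X (M v u).
Proof. by elim: k => //= k IH; rewrite M_Xl IH. Qed.

Lemma M_assoc (p q u : {poly F}) : M (M p q) u = M p (M q u).
Proof.
transitivity (\sum_(i < size p) p`_i *: iter i X (M q u)); last by [].
rewrite (_ : M p q = \sum_(i < size p) p`_i *: iter i X q) // M_suml; apply: eq_bigr => i _.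
by rewrite M_scalel M_iterXl.
Qed.


Lemma size_le_pred (p : {poly F}) k : (size p <= k.+1)%N -> p`_k = 0 -> (size p <= k)%N.
Proof.
move=> h1 h2; rewrite leqNgt; apply/negP => h.
have e : size p = k.+1 by apply/eqP; rewrite eqn_leq h1 h.
have : lead_coef p == 0 by rewrite /lead_coef e /= h2.
rewrite lead_coef_eq0 => /eqP p0; by rewrite p0 size_poly0 in h.
Qed.

Lemma monic_of (p : {poly F}) k : (size p <= k.+1)%N -> p`_k = 1 ->
  p \is monic /\ size p = k.+1.
Proof.
move=> h1 h2.
have e : size p = k.+1.
  apply/eqP; rewrite eqn_leq h1 /=; rewrite ltnNge; apply/negP => h.
  by move: h2; rewrite nth_default // => /eqP; rewrite eq_sym oner_eq0.
by split => //; rewrite monicE /lead_coef e /= h2.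
Qed.

Lemma size_monic_gt0 {p : {poly F}} : p \is monic -> (0 < size p)%N.
Proof. by move=> m; rewrite size_poly_gt0 monic_neq0. Qed.

Lemma X_monic {p : {poly F}} : p \is monic -> X p \is monic /\ size (X p) = (size p).+1.
Proof.
move=> m; apply: monic_of; first by rewrite /skmulX size_poly.
have := size_monic_gt0 m; case e: (size p) => [|s] // _.
rewrite coef_X (nth_default 0 (_ : (size p <= s.+1)%N)) ?e // delta0 addr0.
by move/monicP: m; rewrite /lead_coef e /= => ->; rewrite rmorph1.
Qed.

Lemma iterX_monic k {p : {poly F}} : p \is monic ->
  iter k X p \is monic /\ size (iter k X p) = (size p + k)%N.
Proof.
move=> m; elim: k => [|k [m' e]] /=; first by rewrite addn0.
by have [-> ->] := X_monic m'; rewrite e addnS.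
Qed.

Lemma xsub_M c (G : {poly F}) : M (xsub c) G = X G - c *: G.
Proof. by rewrite /xsub M_subl M_X M_C. Qed.

Lemma xsub_monic c {G : {poly F}} : G \is monic ->
  M (xsub c) G \is monic /\ size (M (xsub c) G) = (size G).+1.
Proof.
move=> m; have [mX eX] := X_monic m.
rewrite xsub_M; apply: monic_of.
  apply: leq_trans (size_polyD _ _) _; rewrite size_polyN geq_max -eX leqnn /=.
  by rewrite (leq_trans (size_scale_leq _ _)) // eX.
rewrite coefB coefZ (nth_default _ (leqnn _)) mulr0 subr0.
by move/monicP: mX; rewrite /lead_coef eX.
Qed.

Lemma skpow_monic c j : skpow sigma delta (xsub c) j \is monic /\
   size (skpow sigma delta (xsub c) j) = j.+1.
Proof.
elim: j => [|j [m e]]; first by rewrite /= monic1 size_poly1.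
by rewrite /skpow iterS -/(skpow _ _ _ j); have [-> ->] := xsub_monic c m; rewrite e.
Qed.

Lemma rdiv_xsub c (H : {poly F}) : exists Q h, H = M Q (xsub c) + h%:P.
Proof.
move: {2}(size H) (leqnn (size H)) => k; elim: k H => [|k IH] H hs.
  exists 0, 0; move: hs; rewrite leqn0 size_poly_eq0 => /eqP ->.
  by rewrite M0l add0r.
case: (ltnP (size H) k.+1) => hk; first exact: IH.
have eH : size H = k.+1 by apply/eqP; rewrite eqn_leq hs hk.
case: k IH hs hk eH => [|d] IH hs hk eH.
  by exists 0, H`_0; rewrite M0l add0r -size1_polyC // eH.
set cc := H`_d.+1.
have [mT eT] : iter d X (xsub c) \is monic /\ size (iter d X (xsub c)) = d.+2.
  have [m1 e1] := xsub_monic c (monic1 F).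
  rewrite M1r in m1 e1; have [-> ->] := iterX_monic d m1.
  by rewrite e1 size_poly1 add2n.
have : (size (H - cc *: iter d X (xsub c))%R <= d.+1)%N.
  apply: size_le_pred.
    apply: leq_trans (size_polyD _ _) _; rewrite size_polyN geq_max eH leqnn /=.
    by rewrite (leq_trans (size_scale_leq _ _)) // eT.
  rewrite coefB coefZ; move/monicP: mT; rewrite /lead_coef eT /= => ->.
  by rewrite mulr1 subrr.
move/IH => [Q [h eq]].
exists (Q + cc *: 'X^d), h.
by rewrite M_addl M_scalel M_Xn addrAC -eq subrK.
Qed.

Lemma key_identity c (h : F) : h \is a GRing.unit ->
  M (xsub (conj sigma delta c h)) h%:P = M (sigma h)%:P (xsub c).
Proof.
move=> hu; rewrite xsub_M M_C /xsub; apply/polyP => k.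
rewrite coefB !coefZ coef_X !coefB coefX !coefC.
case: k => [|[|k]] /=.
- rewrite add0r /conj mulrDl mulrVK // mulrVK // sub0r mulrN.
  by rewrite opprD addrCA subrr addr0.
- by rewrite coefC /= delta0 !(mulr0, subr0, addr0, mulr1).
- by rewrite coefC /= rmorph0 delta0 !(mulr0, subr0, addr0, mulr1).
Qed.

Local Notation rdiv := (rdivides sigma delta).
Local Notation I := (Iset sigma delta).

Lemma rdiv_trans q p u : rdiv q p -> rdiv u q -> rdiv u p.
Proof. by move=> [s ->] [t ->]; exists (M s t); rewrite M_assoc. Qed.

Lemma rdiv_mull w q p : rdiv q p -> rdiv q (M w p).
Proof. by move=> [s ->]; exists (M w s); rewrite M_assoc. Qed.

Lemma rdiv_sub q p p' : rdiv q p -> rdiv q p' -> rdiv q (p - p').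
Proof. by move=> [s ->] [t ->]; exists (s - t); rewrite M_subl. Qed.

Lemma rdiv_scale c q p : rdiv q p -> rdiv q (c *: p).
Proof. by move=> [s ->]; exists (c *: s); rewrite M_scalel. Qed.

Lemma rdiv_1 p : rdiv 1 p.
Proof. by exists p; rewrite M1r. Qed.

Lemma rdiv_refl q : rdiv q q.
Proof. by exists 1; rewrite -polyC1 M_C scale1r. Qed.

Lemma skpow_rdiv u j k : (j <= k)%N -> rdiv (skpow sigma delta u j) (skpow sigma delta u k).
Proof.
move/subnK <-; elim: (k - j)%N => [|m IH]; first exact: rdiv_refl.
by rewrite addSn /skpow iterS; apply: rdiv_mull.
Qed.

Lemma Iset_cat1 Pre x p : I (Pre ++ [:: x]) p <-> I Pre p /\ rdiv x p.
Proof.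
split.
  move=> h; split; first by move=> q qi; apply: h; rewrite mem_cat qi.
  by apply: h; rewrite mem_cat mem_seq1 eqxx orbT.
move=> [h1 h2] q; rewrite mem_cat mem_seq1 => /orP [/h1 //|/eqP -> //].
Qed.

Lemma Iset_sub Om p p' : I Om p -> I Om p' -> I Om (p - p').
Proof. by move=> h h' q qi; apply: rdiv_sub; [apply: h|apply: h']. Qed.

Lemma Iset_scale Om c p : I Om p -> I Om (c *: p).
Proof. by move=> h q qi; apply: rdiv_scale; apply: h. Qed.

Lemma Iset_mull Om w p : I Om p -> I Om (M w p).
Proof. by move=> h q qi; apply: rdiv_mull; apply: h. Qed.

Definition Gspec Om (G : {poly F}) :=
  I Om G /\ G \is monic /\ forall p, I Om p -> p != 0 -> (size G <= size p)%N.

Lemma Guniq Om G1 G2 : Gspec Om G1 -> Gspec Om G2 -> G1 = G2.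
Proof.
move=> [I1 [m1 min1]] [I2 [m2 min2]].
have e : size G1 = size G2.
  by apply/eqP; rewrite eqn_leq min1 ?monic_neq0 // min2 ?monic_neq0.
apply/eqP; rewrite -subr_eq0; apply/negP => nz.
have := min1 _ (@Iset_sub Om _ _ I1 I2) (introN idP nz).
have := size_monic_gt0 m1; case e1: (size G1) => [|k] // _.
have : (size (G1 - G2)%R <= k)%N.
  apply: size_le_pred.
    apply: leq_trans (size_polyD _ _) _; by rewrite size_polyN -e e1 maxnn.
  rewrite coefB; move/monicP: m1; rewrite /lead_coef e1 /= => ->.
  by move/monicP: m2; rewrite /lead_coef -e e1 /= => ->; rewrite subrr.
move=> h1 h2; have := leq_trans h2 h1; by rewrite ltnn.
Qed.

Lemma Fspec {Om} : (exists p, I Om p /\ p != 0) -> Gspec Om (F_Omega sigma delta Om).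
Proof.
move=> [p [Ip p0]].
have [q [Iq [q0 minq]]] : exists q, I Om q /\ q != 0 /\
    forall q', I Om q' -> q' != 0 -> (size q <= size q')%N.
  suff H : forall k (p : {poly F}), (size p <= k)%N -> I Om p -> p != 0 -> exists q, I Om q /\ q != 0 /\
    forall q', I Om q' -> q' != 0 -> (size q <= size q')%N by apply: (H _ p (leqnn _)).
  elim => [|k IH] p1 hs Ip1 nz1.
    by move: hs; rewrite leqn0 size_poly_eq0 (negPf nz1).
  case: (classic (exists q', I Om q' /\ q' != 0 /\ (size q' < size p1)%N)).
    move=> [q' [Iq' [nz' lt']]]; apply: (IH q') => //.
    by rewrite -ltnS (leq_trans lt' hs).
  move=> nex; exists p1; split => //; split => // q' Iq' nz'.
  rewrite leqNgt; apply/negP => lt; apply: nex; by exists q'.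
have cn : lead_coef q != 0 by rewrite lead_coef_eq0.
have hG : Gspec Om ((lead_coef q)^-1 *: q).
  have := size_poly_gt0 q; rewrite q0; case e: (size q) => [|k] // _.
  have [mG eG] : (lead_coef q)^-1 *: q \is monic /\ size ((lead_coef q)^-1 *: q) = k.+1.
    apply: monic_of; first by rewrite -e size_scale_leq.
    have lk : lead_coef q = q`_k by rewrite /lead_coef e.
    by rewrite coefZ -lk mulVr // Fdiv.
  split; first exact: Iset_scale.
  split=> // q' Iq' nz'; rewrite eG -e; exact: minq.
have := epsilon_spec (inhabits 0) (is_Fgen sigma delta Om).
rewrite -/(F_Omega sigma delta Om) => H.
case: (H (ex_intro _ _ (or_introl hG))) => // [[_ H0]].
by move: p0; rewrite (H0 p Ip) eqxx.
Qed.


Local Notation pw c j := (skpow sigma delta (xsub c) j).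
Local Notation FF := (F_Omega sigma delta).
Definition nzI Om := exists p, I Om p /\ p != 0.

Lemma Feq A B : (forall p, I A p <-> I B p) -> nzI A -> FF A = FF B.
Proof.
move=> h nzA; have nzB : nzI B by case: nzA => p [Ip p0]; exists p; split => //; apply/h.
apply: (@Guniq B); last exact: Fspec.
have [IA [mA minA]] := Fspec nzA.
split; first by apply/h.
split => // p Ip p0; apply: minA => //; exact/h.
Qed.

Lemma I_down Pre c j p : I (Pre ++ [:: pw c j.+1]) p -> I (Pre ++ [:: pw c j]) p.
Proof.
move/Iset_cat1 => [h1 h2]; apply/Iset_cat1; split => //.
by apply: rdiv_trans h2 _; apply: skpow_rdiv.
Qed.

Lemma core {Pre c j G} : I (Pre ++ [:: pw c j]) G ->
  I (Pre ++ [:: pw c j.+1]) G \/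
  exists h, h != 0 /\ I (Pre ++ [:: pw c j.+1]) (M (xsub (conj sigma delta c h)) G).
Proof.
move/Iset_cat1 => [IP [H eG]].
have [Q [h eH]] := rdiv_xsub c H.
case: (eqVneq h 0) => [h0|hn0].
  left; apply/Iset_cat1; split => //; exists Q.
  by rewrite eG eH h0 addr0 M_assoc.
right; exists h; split => //; apply/Iset_cat1; split; first exact: Iset_mull.
set c' := conj sigma delta c h.
exists (M (xsub c') Q + (sigma h)%:P).
rewrite /skpow iterS -/(skpow _ _ _ j) -M_assoc M_addl -key_identity ?Fdiv //.
by rewrite -/c' M_assoc -M_addr -eH eG M_assoc.
Qed.

Lemma step_le {Pre c j} : nzI (Pre ++ [:: pw c j.+1]) ->
  (size (FF (Pre ++ [:: pw c j.+1])) <= (size (FF (Pre ++ [:: pw c j]))).+1)%N.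
Proof.
move=> nzB.
have nzA : nzI (Pre ++ [:: pw c j]) by case: nzB => p [Ip p0]; exists p; split => //; exact: I_down.
have [IA [mA minA]] := Fspec nzA.
have [IB [mB minB]] := Fspec nzB.
case: (core IA) => [IBG | [h [_ IBC]]].
  by apply: leq_trans (minB _ IBG (monic_neq0 mA)) _.
have [mC eC] := xsub_monic (conj sigma delta c h) mA.
by rewrite -eC; apply: minB => //; exact: monic_neq0.
Qed.

Lemma step_eq {Pre c j} : nzI (Pre ++ [:: pw c j.+1]) ->
  size (FF (Pre ++ [:: pw c j.+1])) = (size (FF (Pre ++ [:: pw c j]))).+1 ->
  exists h, h != 0 /\ FF (Pre ++ [:: pw c j.+1]) =
       M (xsub (conj sigma delta c h)) (FF (Pre ++ [:: pw c j])).
Proof.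
move=> nzB eS.
have nzA : nzI (Pre ++ [:: pw c j]) by case: nzB => p [Ip p0]; exists p; split => //; exact: I_down.
have [IA [mA minA]] := Fspec nzA.
have [IB [mB minB]] := Fspec nzB.
case: (core IA) => [IBG | [h [hn0 IBC]]].
  by have := minB _ IBG (monic_neq0 mA); rewrite eS ltnn.
exists h; split => //.
have [mC eC] := xsub_monic (conj sigma delta c h) mA.
apply: (@Guniq (Pre ++ [:: pw c j.+1])); first exact: Fspec.
split => //; split => // p Ip p0; rewrite eC -eS; exact: minB.
Qed.

Lemma FF_nil : FF [::] = 1.
Proof.
have nz : nzI [::] by exists 1; split; [by [] | exact: oner_neq0].
apply: (@Guniq [::]); first exact: Fspec.
split; first by [].
split; first exact: monic1.
move=> p _ p0; by rewrite size_poly1 size_poly_gt0.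
Qed.


Lemma skprod_rcons s f : skprod_rev sigma delta (s ++ [:: f]) = M f (skprod_rev sigma delta s).
Proof. by rewrite /skprod_rev cats1 foldl_rcons. Qed.

Lemma main_sec (n : nat) (a : nat -> F) (r : nat -> nat)
  (Hind : P_independent sigma delta
            [seq skpow sigma delta (xsub (a i)) (r i) | i <- iota 0 n]) :
  exists beta : nat -> nat -> F,
    (forall i j, (i < n)%N -> (1 <= j <= r i)%N -> beta i j != 0) /\
    (forall i j, (i < n)%N -> (1 <= j <= r i)%N ->
       F_Omega sigma delta
         ([seq skpow sigma delta (xsub (a k)) (r k) | k <- iota 0 i]
            ++ [:: skpow sigma delta (xsub (a i)) j])
       = skprod_rev sigma delta
           ([seq xsub (conj sigma delta (a k) (beta k l))
               | k <- iota 0 i, l <- iota 1 (r k)]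
            ++ [seq xsub (conj sigma delta (a i) (beta i l)) | l <- iota 1 j])).
Proof.
have [_ [nzn degn]] := Hind.
pose Pl i := [seq pw (a k) (r k) | k <- iota 0 i].
have Pl_sub : forall i p, (i <= n)%N -> I (Pl n) p -> I (Pl i) p.
  move=> i p hi Ip x /mapP [k]; rewrite mem_iota add0n => /andP [_ hk] ->.
  by apply: Ip; apply/mapP; exists k => //; rewrite mem_iota add0n (leq_trans hk hi).
have nzP : forall i, (i <= n)%N -> nzI (Pl i).
  by move=> i hi; case: nzn => p [Ip p0]; exists p; split => //; apply: Pl_sub.
have nzO : forall i j, (i < n)%N -> (j <= r i)%N -> nzI (Pl i ++ [:: pw (a i) j]).
  move=> i j hi hj; case: nzn => p [Ip p0]; exists p; split => //.
  apply/Iset_cat1; split; first by apply: Pl_sub => //; exact: ltnW.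
  apply: (@rdiv_trans (pw (a i) (r i))); last exact: skpow_rdiv.
  by apply: Ip; apply/mapP; exists i => //; rewrite mem_iota add0n hi.
have PlS : forall i, Pl i.+1 = Pl i ++ [:: pw (a i) (r i)].
  by move=> i; rewrite /Pl -addn1 iotaD map_cat.
have E0 : forall i, (i <= n)%N -> FF (Pl i ++ [:: pw (a i) 0]) = FF (Pl i).
  move=> i hi.
  have eqv : forall p, I (Pl i ++ [:: pw (a i) 0]) p <-> I (Pl i) p.
    move=> p; split; first by move/Iset_cat1 => [].
    by move=> h; apply/Iset_cat1; split => //; apply: rdiv_1.
  apply: Feq => //; case: (nzP i hi) => p [Ip p0]; exists p; split => //; exact/eqv.
pose S i := (\sum_(k <- iota 0 i) r k)%N.
have hS : forall i, S i.+1 = (S i + r i)%N.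
  by move=> i; rewrite /S -addn1 iotaD big_cat big_seq1.
have hZn : size (FF (Pl n)) = (S n + 1)%N.
  have [_ [m _]] := Fspec nzn.
  move: degn; rewrite /skdeg big_map.
  rewrite (eq_bigr (fun k => r k)); last by move=> k _; have [_ ->] := skpow_monic (a k) (r k).
  rewrite -/(S n) -/(Pl n) => <-; rewrite addn1 prednK //; exact: size_monic_gt0.
have Eeq := @count_lemma n r (fun i j => size (FF (Pl i ++ [:: pw (a i) j])))
  (fun i => size (FF (Pl i))) S hS
  (fun i hi => ltac:(by rewrite /= E0 // ltnW))
  (fun i hi => ltac:(by rewrite /= PlS))
  ltac:(by rewrite /= FF_nil size_poly1) (big_nil _ _ _ _) hZn
  (fun i j hi hj => leq_trans (step_le (nzO i j.+1 hi hj)) (eq_leq (esym (addn1 _)))).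
have ex : forall i j, (i < n)%N -> (1 <= j <= r i)%N -> exists h, h != 0 /\
    FF (Pl i ++ [:: pw (a i) j]) = M (xsub (conj sigma delta (a i) h)) (FF (Pl i ++ [:: pw (a i) j.-1])).
  move=> i [|j] hi // /andP [_ hj] /=.
  apply: step_eq; first exact: nzO.
  rewrite /= in Eeq; rewrite Eeq // Eeq ?(ltnW hj) //.
  by rewrite !addn1 addnS.
pose beta i j := epsilon (inhabits 0) (fun h => h != 0 /\
    FF (Pl i ++ [:: pw (a i) j]) = M (xsub (conj sigma delta (a i) h)) (FF (Pl i ++ [:: pw (a i) j.-1]))).
have hb : forall i j, (i < n)%N -> (1 <= j <= r i)%N -> beta i j != 0 /\
    FF (Pl i ++ [:: pw (a i) j]) = M (xsub (conj sigma delta (a i) (beta i j))) (FF (Pl i ++ [:: pw (a i) j.-1])).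
  by move=> i j hi hj; exact: (epsilon_spec (inhabits 0) _ (ex i j hi hj)).
exists beta; split; first by move=> i j hi hj; case: (hb i j hi hj).
pose flat i := [seq xsub (conj sigma delta (a k) (beta k l)) | k <- iota 0 i, l <- iota 1 (r k)].
pose lin i j := [seq xsub (conj sigma delta (a i) (beta i l)) | l <- iota 1 j].
have hO : forall i, (i < n)%N -> FF (Pl i) = skprod_rev sigma delta (flat i) ->
    forall j, (j <= r i)%N -> FF (Pl i ++ [:: pw (a i) j]) = skprod_rev sigma delta (flat i ++ lin i j).
  move=> i hi hPi; elim => [|j IH] hj.
    by rewrite E0 ?(ltnW hi) // /lin /= cats0.
  have [_ ->] := hb i j.+1 hi hj.
  rewrite -[j.+1.-1]/j IH; last exact: ltnW.
  by rewrite /lin -addn1 iotaD map_cat catA skprod_rcons add1n addn1.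
have hP : forall i, (i <= n)%N -> FF (Pl i) = skprod_rev sigma delta (flat i).
  elim => [|i IH] hi; first by rewrite /= FF_nil.
  rewrite PlS hO ?IH ?(ltnW hi) //.
  by rewrite /flat -[i.+1]addn1 iotaD allpairs_cat /= cats0.
move=> i j hi /andP [_ hj].
by apply: hO => //; apply: hP; exact: ltnW.
Qed.

End S.
Theorem mainTheorem6
  (F : unitRingType)
  (Fdiv : forall c : F, c != 0 -> c \is a GRing.unit)
  (sigma : {rmorphism F -> F})
  (delta : F -> F)
  (delta_add : forall b c : F, delta (b + c) = delta b + delta c)
  (delta_mul : forall b c : F, delta (b * c) = sigma b * delta c + delta b * c)
  (n : nat) (a : nat -> F) (r : nat -> nat)
  (r_pos : forall i, (i < n)%N -> (0 < r i)%N)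
  (Hind : P_independent sigma delta
            [seq skpow sigma delta (xsub (a i)) (r i) | i <- iota 0 n]) :
  exists beta : nat -> nat -> F,
    (forall i j, (i < n)%N -> (1 <= j <= r i)%N -> beta i j != 0) /\
    (forall i j, (i < n)%N -> (1 <= j <= r i)%N ->
       F_Omega sigma delta
         ([seq skpow sigma delta (xsub (a k)) (r k) | k <- iota 0 i]
            ++ [:: skpow sigma delta (xsub (a i)) j])
       = skprod_rev sigma delta
           ([seq xsub (conj sigma delta (a k) (beta k l))
               | k <- iota 0 i, l <- iota 1 (r k)]
            ++ [seq xsub (conj sigma delta (a i) (beta i l)) | l <- iota 1 j])).
Proof. exact: (@main_sec F Fdiv sigma delta delta_add delta_mul n a r Hind). Qed.
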